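(* Let $(X,d)$ be a compact metric space and let $f_{1,\infty}=(f_n)_{n=1}^\infty$ be a sequence of continuous maps $f_n:X\to X$ converging uniformly to a map $f:X\to X$. Then for every $N\in\mathbb{N}$, $(X,f_{1,\infty})$ is DC2' if and only if its $N$-th iterate $(X,f_{1,\infty}^{[N]})$ is DC2'.
   Context: For $i,n\in\mathbb{N}$ write $f_i^n=f_{i+n-1}\circ\cdots\circ f_i$ and $f_i^0=\mathrm{id}_X$. The $N$-th iterate is $f_{1,\infty}^{[N]}=(f_{N(n-1)+1}^N)_{n=1}^\infty$, whose $n$-fold composition from index $1$ is $f_1^{Nn}$. For a non-autonomous system $g_{1,\infty}$ with compositions $g_1^i$, points $x,y\in X$ and $t>0$, set $\Phi(g_{1,\infty},x,y,t)=\liminf_{n\to\infty}\frac1n\#\{0\le i\le n-1: d(g_1^i(x),g_1^i(y))<t\}$ and $\Phi^*(g_{1,\infty},x,y,t)=\limsup_{n\to\infty}\frac1n\#\{0\le i\le n-1: d(g_1^i(x),g_1^i(y))<t\}$. The system is DC2' if there is an uncountable $S\subseteq X$ such that for all distinct $x,y\in S$: $\Phi(g_{1,\infty},x,y,\varepsilon)=0$ for some $\varepsilon>0$ and $\Phi^*(g_{1,\infty},x,y,t)>0$ for all $t>0$. *)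

(* Defs.v *)
From Stdlib Require Import Reals List.
From Coquelicot Require Import Coquelicot.
Open Scope R_scope.

Definition is_metric {X : Type} (d : X -> X -> R) : Prop :=
  (forall x y, 0 <= d x y) /\
  (forall x y, d x y = 0 <-> x = y) /\
  (forall x y, d x y = d y x) /\
  (forall x y z, d x z <= d x y + d y z).

Definition mopen {X : Type} (d : X -> X -> R) (U : X -> Prop) : Prop :=
  forall x, U x -> exists eps, 0 < eps /\ forall y, d x y < eps -> U y.

Definition mcompact {X : Type} (d : X -> X -> R) : Prop :=
  forall C : (X -> Prop) -> Prop,
    (forall U, C U -> mopen d U) ->
    (forall x, exists U, C U /\ U x) ->
    exists l : list (X -> Prop),
      (forall U, In U l -> C U) /\ (forall x, exists U, In U l /\ U x).

Definition mcontinuous {X : Type} (d : X -> X -> R) (g : X -> X) : Prop :=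
  forall x eps, 0 < eps -> exists delta, 0 < delta /\
    forall y, d x y < delta -> d (g x) (g y) < eps.

(* A sequence is 0-indexed: f k stands for the paper's f_{k+1}. *)
Definition unif_conv {X : Type} (d : X -> X -> R) (f : nat -> X -> X)
  (g : X -> X) : Prop :=
  forall eps, 0 < eps -> exists M, forall n x, (M <= n)%nat -> d (f n x) (g x) < eps.

(* comp f i n = f_{i+n-1} o ... o f_i in 0-based indexing (comp f i 0 = id) *)
Fixpoint comp {X : Type} (f : nat -> X -> X) (i n : nat) (x : X) : X :=
  match n with
  | O => x
  | S m => f (i + m)%nat (comp f i m x)
  end.

(* N-th iterate: n-th map (0-based) is f_{Nn+1}^N *)
Definition iterN {X : Type} (f : nat -> X -> X) (N : nat) : nat -> X -> X :=
  fun n => comp f (N * n) N.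

Fixpoint cnt {X : Type} (d : X -> X -> R) (g : nat -> X -> X) (x y : X) (t : R)
  (n : nat) : nat :=
  match n with
  | O => O
  | S m => (cnt d g x y t m +
            (if Rlt_dec (d (comp g 0 m x) (comp g 0 m y)) t then 1 else 0))%nat
  end.

Definition freq {X : Type} (d : X -> X -> R) (g : nat -> X -> X) (x y : X) (t : R)
  : nat -> R :=
  fun n => INR (cnt d g x y t (S n)) / INR (S n).

Definition Phi {X : Type} d (g : nat -> X -> X) x y t : Rbar :=
  LimInf_seq (freq d g x y t).
Definition Phi_star {X : Type} d (g : nat -> X -> X) x y t : Rbar :=
  LimSup_seq (freq d g x y t).

Definition uncountable {X : Type} (S : X -> Prop) : Prop :=
  ~ exists h : X -> nat, forall x y, S x -> S y -> h x = h y -> x = y.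

Definition DC2' {X : Type} (d : X -> X -> R) (g : nat -> X -> X) : Prop :=
  exists S : X -> Prop, uncountable S /\
    forall x y, S x -> S y -> x <> y ->
      (exists eps, 0 < eps /\ Phi d g x y eps = Finite 0) /\
      (forall t, 0 < t -> Rbar_lt (Finite 0) (Phi_star d g x y t)).

(* Main.v *)
Require Import Defs.
From Stdlib Require Import Reals Lra Lia Psatz List ZArith.
From Coquelicot Require Import Coquelicot.
Open Scope R_scope.
Local Notation comp := Defs.comp.

Lemma comp_add {X} (f : nat -> X -> X) i a b x :
  comp f i (a+b)%nat x = comp f (i+a)%nat b (comp f i a x).
Proof.
  induction b; simpl.
  - rewrite Nat.add_0_r; reflexivity.
  - rewrite Nat.add_succ_r; simpl; rewrite IHb; f_equal; lia.
Qed.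

Lemma comp_iterN {X} (f : nat -> X -> X) N m x :
  comp (iterN f N) 0 m x = comp f 0 (N*m)%nat x.
Proof.
  induction m; simpl.
  - rewrite Nat.mul_0_r; reflexivity.
  - rewrite IHm. unfold iterN. replace (N * S m)%nat with (N*m + N)%nat by lia.
    rewrite comp_add. reflexivity.
Qed.

Section Metric.
Context {X : Type} (d : X -> X -> R) (Hd : is_metric d).

Let dpos : forall x y, 0 <= d x y. Proof. apply Hd. Qed.
Let dsym : forall x y, d x y = d y x. Proof. apply Hd. Qed.
Let dtri : forall x y z, d x z <= d x y + d y z. Proof. apply Hd. Qed.

Lemma list_min_rad (P : X -> R -> Prop) (C : (X -> Prop) -> Prop) l :
  (forall U, C U -> exists x r, 0 < r /\ P x r /\ forall y, U y <-> d x y < r) ->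
  (forall U, In U l -> C U) ->
  exists delta, 0 < delta /\ forall U, In U l -> exists x r, delta <= r /\ 0 < r /\ P x r /\
     forall y, U y <-> d x y < r.
Proof.
  intros HC. induction l as [|a l IH]; intros Hl.
  - exists 1; split; [lra|]. intros U [].
  - destruct IH as [de [Hde H]]. { intros U HU; apply Hl; right; exact HU. }
    destruct (HC a (Hl a (or_introl eq_refl))) as [x [r [Hr [HP Hi]]]].
    exists (Rmin r de); split. { apply Rmin_glb_lt; lra. }
    intros U [<-|HU].
    + exists x, r; split; [apply Rmin_l|]; split; [exact Hr|]; split; [exact HP|exact Hi].
    + destruct (H U HU) as [x' [r' [H1 H2]]]. exists x', r'; split; auto.
      pose proof (Rmin_r r de); lra.
Qed.

Lemma unif_cont (g : X -> X) : mcompact d -> mcontinuous d g ->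
  forall eps, 0 < eps -> exists delta, 0 < delta /\
    forall u v, d u v < delta -> d (g u) (g v) < eps.
Proof.
  intros Hc Hg eps Heps.
  set (P := fun x r => forall y, d x y < 2*r -> d (g x) (g y) < eps/2).
  set (C := fun U : X -> Prop => exists x r, 0 < r /\ P x r /\ forall y, U y <-> d x y < r).
  destruct (Hc C) as [l [Hl1 Hl2]].
  - intros U [x [r [Hr [HP Hi]]]] y Hy.
    apply Hi in Hy. exists (r - d x y); split; [lra|].
    intros z Hz. apply Hi. pose proof (dtri x y z); lra.
  - intros x. destruct (Hg x (eps/2)) as [de [Hde H]]; [lra|].
    exists (fun y => d x y < de/2); split.
    + exists x, (de/2); repeat split; try lra. intros y Hy. apply H; lra.
    + simpl. rewrite (proj2 (proj1 (proj2 Hd) x x) eq_refl). lra.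
  - destruct (list_min_rad P C l (fun U H => H) Hl1) as [de [Hde H]].
    exists de; split; auto. intros u v Huv.
    destruct (Hl2 u) as [U [HU Uu]].
    destruct (H U HU) as [x [r [Hr1 [Hr2 [HP Hi]]]]].
    apply Hi in Uu.
    assert (A1 : d (g x) (g u) < eps/2) by (apply HP; lra).
    assert (A2 : d (g x) (g v) < eps/2) by (apply HP; pose proof (dtri x u v); lra).
    pose proof (dtri (g u) (g x) (g v)). rewrite (dsym (g u) (g x)) in H0. lra.
Qed.

Lemma finite_equi (f : nat -> X -> X) : mcompact d -> (forall n, mcontinuous d (f n)) ->
  forall eps, 0 < eps -> forall K, exists delta, 0 < delta /\
    forall n u v, (n < K)%nat -> d u v < delta -> d (f n u) (f n v) < eps.
Proof.
  intros Hc Hf eps Heps K. induction K as [|K IH].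
  - exists 1; split; [lra|]; intros; lia.
  - destruct IH as [de [Hde H]].
    destruct (unif_cont (f K) Hc (Hf K) eps Heps) as [de2 [Hde2 H2]].
    exists (Rmin de de2); split; [apply Rmin_glb_lt; lra|].
    intros n u v Hn Huv. pose proof (Rmin_l de de2); pose proof (Rmin_r de de2).
    destruct (Nat.eq_dec n K) as [->|Hne].
    + apply H2; lra.
    + apply H; [lia|lra].
Qed.

Lemma equi (f : nat -> X -> X) flim : mcompact d -> (forall n, mcontinuous d (f n)) ->
  unif_conv d f flim ->
  forall eps, 0 < eps -> exists delta, 0 < delta /\
    forall n u v, d u v < delta -> d (f n u) (f n v) < eps.
Proof.
  intros Hc Hf Hu eps Heps.
  destruct (Hu (eps/5)) as [M HM]; [lra|].
  destruct (unif_cont (f M) Hc (Hf M) (eps/5)) as [de1 [Hde1 H1]]; [lra|].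
  destruct (finite_equi f Hc Hf eps Heps M) as [de2 [Hde2 H2]].
  exists (Rmin de1 de2); split; [apply Rmin_glb_lt; lra|].
  intros n u v Huv. pose proof (Rmin_l de1 de2); pose proof (Rmin_r de1 de2).
  destruct (Nat.lt_ge_cases n M) as [Hn|Hn].
  - apply H2; [lia|lra].
  - assert (a1 := HM n u Hn). assert (a2 := HM M u (le_n M)).
    assert (a3 : d (f M u) (f M v) < eps/5) by (apply H1; lra).
    assert (a4 := HM M v (le_n M)). assert (a5 := HM n v Hn).
    rewrite dsym in a2. rewrite dsym in a5.
    pose proof (dtri (f n u) (flim u) (f n v)).
    pose proof (dtri (flim u) (f M u) (f n v)).
    pose proof (dtri (f M u) (f M v) (f n v)).
    pose proof (dtri (f M v) (flim v) (f n v)).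
    lra.
Qed.

Lemma equi_comp (f : nat -> X -> X) flim : mcompact d -> (forall n, mcontinuous d (f n)) ->
  unif_conv d f flim ->
  forall k eps, 0 < eps -> exists delta, 0 < delta /\
    forall i u v, d u v < delta -> d (comp f i k u) (comp f i k v) < eps.
Proof.
  intros Hc Hf Hu k. induction k as [|k IH]; intros eps Heps.
  - exists eps; split; auto.
  - destruct (equi f flim Hc Hf Hu eps Heps) as [de1 [Hde1 H1]].
    destruct (IH de1 Hde1) as [de [Hde H]].
    exists de; split; auto. intros i u v Huv. simpl. apply H1. apply H. exact Huv.
Qed.

Lemma equi_comp_le (f : nat -> X -> X) flim : mcompact d -> (forall n, mcontinuous d (f n)) ->
  unif_conv d f flim ->
  forall K eps, 0 < eps -> exists delta, 0 < delta /\
    forall j i u v, (j <= K)%nat -> d u v < delta -> d (comp f i j u) (comp f i j v) < eps.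
Proof.
  intros Hc Hf Hu K eps Heps. induction K as [|K IH].
  - destruct (equi_comp f flim Hc Hf Hu 0 eps Heps) as [de [Hde H]].
    exists de; split; auto. intros j i u v Hj Huv. assert (j = 0%nat) by lia; subst; auto.
  - destruct IH as [de [Hde H]].
    destruct (equi_comp f flim Hc Hf Hu (S K) eps Heps) as [de2 [Hde2 H2]].
    exists (Rmin de de2); split; [apply Rmin_glb_lt; lra|].
    intros j i u v Hj Huv. pose proof (Rmin_l de de2); pose proof (Rmin_r de de2).
    destruct (Nat.eq_dec j (S K)) as [->|Hne].
    + apply H2; lra.
    + apply H; [lia|lra].
Qed.

End Metric.

Definition hit {X} (d : X -> X -> R) (g : nat -> X -> X) (x y : X) (t : R) (i : nat) :=
  d (comp g 0 i x) (comp g 0 i y) < t.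

Lemma fact_hit {X} (d : X -> X -> R) f flim : is_metric d -> mcompact d ->
  (forall n, mcontinuous d (f n)) -> unif_conv d f flim ->
  forall N eps, 0 < eps -> exists delta, 0 < delta /\
   forall x y i j, (j <= N)%nat -> hit d f x y delta i -> hit d f x y eps (i+j).
Proof.
  intros Hd Hc Hf Hu N eps Heps.
  destruct (equi_comp_le d Hd f flim Hc Hf Hu N eps Heps) as [de [Hde H]].
  exists de; split; auto. intros x y i j Hj Hh. unfold hit in *.
  rewrite !comp_add. apply H; auto.
Qed.


Section Counts.
Context {X : Type} (d : X -> X -> R) (g : nat -> X -> X) (x y : X) (t : R).

Lemma cnt_S n : cnt d g x y t (S n) = (cnt d g x y t n + if Rlt_dec (d (comp g 0 n x) (comp g 0 n y)) t then 1 else 0)%nat.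
Proof. reflexivity. Qed.

Lemma cnt_mono n k : (cnt d g x y t n <= cnt d g x y t (n+k))%nat.
Proof. induction k; [rewrite Nat.add_0_r; lia|]. rewrite Nat.add_succ_r, cnt_S. lia. Qed.

Lemma cnt_step n k : (cnt d g x y t (n+k) <= cnt d g x y t n + k)%nat.
Proof. induction k; [rewrite Nat.add_0_r; lia|]. rewrite Nat.add_succ_r, cnt_S.
  destruct Rlt_dec; lia. Qed.

Lemma cnt_full n k : (forall j, (j < k)%nat -> hit d g x y t (n+j)) ->
  cnt d g x y t (n+k) = (cnt d g x y t n + k)%nat.
Proof. induction k; intros H; [rewrite Nat.add_0_r; lia|]. rewrite Nat.add_succ_r, cnt_S.
  rewrite IHk by (intros; apply H; lia).
  destruct Rlt_dec as [|n0]; [lia|]. exfalso; apply n0, (H k); lia. Qed.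

Lemma cnt_empty n k : (forall j, (j < k)%nat -> ~ hit d g x y t (n+j)) ->
  cnt d g x y t (n+k) = cnt d g x y t n.
Proof. induction k; intros H; [rewrite Nat.add_0_r; lia|]. rewrite Nat.add_succ_r, cnt_S.
  rewrite IHk by (intros; apply H; lia).
  destruct Rlt_dec as [h|]; [|lia]. exfalso; apply (H k); [lia|exact h]. Qed.
End Counts.

Lemma cnt_iter_S {X} d (f : nat -> X -> X) N x y t M :
  cnt d (iterN f N) x y t (S M) = (cnt d (iterN f N) x y t M +
    if Rlt_dec (d (comp f 0 (N*M) x) (comp f 0 (N*M) y)) t then 1 else 0)%nat.
Proof. rewrite cnt_S, !comp_iterN. reflexivity. Qed.

Section E.
Context {X : Type} (d : X -> X -> R) (f : nat -> X -> X) (x y : X) (N : nat) (HN : (1 <= N)%nat).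

Lemma E1 de eps : (forall i j, (j <= N)%nat -> hit d f x y de i -> hit d f x y eps (i+j)) ->
  forall M, (N * cnt d (iterN f N) x y de M <= cnt d f x y eps (N*M))%nat.
Proof.
  intros H M. induction M; [simpl; lia|].
  rewrite cnt_iter_S. replace (N * S M)%nat with (N*M + N)%nat by lia.
  destruct Rlt_dec as [h|h].
  - rewrite cnt_full. lia. intros j Hj. apply H; [lia|exact h].
  - pose proof (cnt_mono d f x y eps (N*M) N). lia.
Qed.

Lemma E2 de eps : (forall i j, (j <= N)%nat -> hit d f x y de i -> hit d f x y eps (i+j)) ->
  forall M, (cnt d f x y de (N*M) <= N * cnt d (iterN f N) x y eps (S M))%nat.
Proof.
  intros H M. induction M; [rewrite Nat.mul_0_r; simpl; lia|].
  rewrite (cnt_iter_S d f N x y eps (S M)). replace (N * S M)%nat with (N*M + N)%nat by lia.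
  destruct Rlt_dec as [h|h].
  - pose proof (cnt_step d f x y de (N*M) N). lia.
  - rewrite cnt_empty. lia. intros j Hj Hh. apply h.
    replace (N*M+N)%nat with ((N*M+j) + (N-j))%nat by lia. apply H; [lia|exact Hh].
Qed.

Lemma E3 t : forall M, (cnt d (iterN f N) x y t M <= cnt d f x y t (N*M))%nat.
Proof.
  intros M. induction M; [simpl; lia|].
  rewrite cnt_iter_S. replace (N * S M)%nat with (S (N*M) + (N-1))%nat by lia.
  pose proof (cnt_mono d f x y t (S (N*M)) (N-1)). rewrite cnt_S in H. lia.
Qed.
End E.
Definition Low (c : nat -> nat) := forall eps, 0 < eps -> forall K, exists n, (K <= n)%nat /\ INR (c n) < eps * INR n.
Definition High (c : nat -> nat) := exists a, 0 < a /\ forall K, exists n, (K <= n)%nat /\ a * INR n < INR (c n).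

Lemma arch (r : R) : exists n : nat, r < INR n.
Proof.
  destruct (archimed r) as [H _]. exists (Z.abs_nat (up r)).
  rewrite INR_IZR_INZ, Zabs2Nat.id_abs.
  assert (up r <= Z.abs (up r))%Z by lia. apply IZR_le in H0. lra.
Qed.

Lemma INRS_pos n : 0 < INR (S n).
Proof. apply lt_0_INR; lia. Qed.

Lemma div_lt a b e : 0 < b -> a / b < e -> a < e * b.
Proof. intros Hb H. apply (Rmult_lt_compat_r b) in H; auto.
  unfold Rdiv in H. rewrite Rmult_assoc, Rinv_l in H; lra. Qed.
Lemma lt_div a b e : 0 < b -> a < e * b -> a / b < e.
Proof. intros Hb H. apply (Rmult_lt_reg_r b); auto. unfold Rdiv.
  rewrite Rmult_assoc, Rinv_l; lra. Qed.
Lemma lt_div2 a b e : 0 < b -> e * b < a -> e < a / b.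
Proof. intros Hb H. apply (Rmult_lt_reg_r b); auto. unfold Rdiv.
  rewrite Rmult_assoc, Rinv_l; lra. Qed.
Lemma div_lt2 a b e : 0 < b -> e < a / b -> e * b < a.
Proof. intros Hb H. apply (Rmult_lt_compat_r b) in H; auto.
  unfold Rdiv in H. rewrite Rmult_assoc, Rinv_l in H; lra. Qed.

Section L.
Variable c : nat -> nat.
Let u := fun n => INR (c (S n)) / INR (S n).

Lemma L1 : LimInf_seq u = Finite 0 -> Low c.
Proof.
  intros H. destruct (ex_LimInf_seq u) as [l Hl].
  rewrite (is_LimInf_seq_unique _ _ Hl) in H. subst l.
  intros eps Heps K. destruct (Hl (mkposreal eps Heps)) as [H1 _].
  destruct (H1 K) as [n [Hn Hu]]. exists (S n); split; [lia|].
  simpl in Hu. apply div_lt; [apply INRS_pos|]. unfold u in Hu; lra.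
Qed.

Lemma L2 : Low c -> LimInf_seq u = Finite 0.
Proof.
  intros Hl. apply is_LimInf_seq_unique. intros eps; split.
  - intros K. destruct (Hl eps (cond_pos eps) (S K)) as [n [Hn Hc]].
    destruct n as [|n]; [lia|]. exists n; split; [lia|].
    unfold u. rewrite Rplus_0_l. apply lt_div; [apply INRS_pos|exact Hc].
  - exists 0%nat. intros n _. unfold u.
    assert (0 <= INR (c (S n)) / INR (S n)).
    { unfold Rdiv. apply Rmult_le_pos; [apply pos_INR|].
      apply Rlt_le, Rinv_0_lt_compat, INRS_pos. }
    pose proof (cond_pos eps). lra.
Qed.

Lemma L3 : Rbar_lt 0 (LimSup_seq u) -> High c.
Proof.
  intros H. destruct (ex_LimSup_seq u) as [l Hl].
  rewrite (is_LimSup_seq_unique _ _ Hl) in H.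
  destruct l as [l| |]; simpl in H, Hl.
  - assert (Hl2 : 0 < l/2) by lra.
    exists (l/2); split; auto. intros K.
    destruct (Hl (mkposreal _ Hl2)) as [H1 _]. destruct (H1 K) as [n [Hn Hu]].
    exists (S n); split; [lia|]. simpl in Hu. apply div_lt2; [apply INRS_pos|].
    unfold u in Hu; lra.
  - exists 1; split; [lra|]. intros K. destruct (Hl 1 K) as [n [Hn Hu]].
    exists (S n); split; [lia|]. apply div_lt2; [apply INRS_pos|exact Hu].
  - contradiction.
Qed.

Lemma L4 : High c -> Rbar_lt 0 (LimSup_seq u).
Proof.
  intros [a [Ha Hh]]. destruct (ex_LimSup_seq u) as [l Hl].
  rewrite (is_LimSup_seq_unique _ _ Hl).
  destruct l as [l| |]; simpl in Hl |- *.
  - destruct (Rlt_or_le 0 l) as [|Hle]; auto. exfalso.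
    destruct (Hl (mkposreal a Ha)) as [_ [N2 H2]].
    destruct (Hh (S N2)) as [n [Hn Hc]]. destruct n as [|n]; [lia|].
    specialize (H2 n ltac:(lia)). simpl in H2.
    assert (a < u n) by (apply lt_div2; [apply INRS_pos|exact Hc]). lra.
  - exact I.
  - destruct (Hl a) as [N2 H2]. destruct (Hh (S N2)) as [n [Hn Hc]].
    destruct n as [|n]; [lia|]. specialize (H2 n ltac:(lia)).
    assert (a < u n) by (apply lt_div2; [apply INRS_pos|exact Hc]). lra.
Qed.
End L.
Section T.
Variables (N : nat) (HN : (1 <= N)%nat) (cf cg : nat -> nat).

Lemma divmod n : exists m r, n = (N*m + r)%nat /\ (r < N)%nat.
Proof. exists (n / N)%nat, (n mod N)%nat. split.
  - apply Nat.div_mod; lia.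
  - apply Nat.mod_upper_bound; lia. Qed.

Lemma INRN_pos : 0 < INR N.
Proof. apply lt_0_INR; lia. Qed.

Lemma T1a : (forall M, (N * cg M <= cf (N*M))%nat) ->
  (forall n k, (cf (n+k) <= cf n + k)%nat) -> Low cf -> Low cg.
Proof.
  intros E Hs Hl eps Heps K.
  destruct (arch (2 * INR N / eps)) as [n0 Hn0].
  destruct (Hl (eps/2) ltac:(lra) (Nat.max (N*(K+1)) n0)) as [n [Hn Hc]].
  destruct (divmod n) as [m [r [Hnm Hr]]].
  assert (a : (N * cg (S m) <= cf n + N)%nat).
  { pose proof (E (S m)). pose proof (Hs n (N - r)%nat).
    replace (N * S m)%nat with (n + (N - r))%nat in * by nia. lia. }
  assert (b : (n < N * S m)%nat) by nia.
  exists (S m); split; [nia|].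
  apply le_INR in a. apply lt_INR in b. rewrite plus_INR, !mult_INR in *.
  assert (d : (n0 <= n)%nat) by lia. apply le_INR in d.
  pose proof INRN_pos.
  assert (e : INR N < eps/2 * INR n0).
  { apply (Rmult_lt_compat_r (eps/2)) in Hn0; [|lra].
    replace (2 * INR N / eps * (eps / 2)) with (INR N) in Hn0 by (field; lra). lra. }
  assert (f : eps * INR n < eps * (INR N * INR (S m))) by (apply Rmult_lt_compat_l; lra).
  apply (Rmult_lt_reg_l (INR N)); auto. nra.
Qed.

Lemma T2a : (forall M, (cf (N*M) <= N * cg (S M))%nat) -> Low cg -> Low cf.
Proof.
  intros E Hl eps Heps K.
  destruct (Hl (eps/2) ltac:(lra) (K+2)%nat) as [m [Hm Hc]].
  destruct m as [|M]; [lia|].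
  exists (N*M)%nat; split; [nia|].
  pose proof (E M) as a. apply le_INR in a. rewrite !mult_INR in *.
  rewrite S_INR in *. pose proof INRN_pos.
  assert (1 <= INR M) by (replace 1 with (INR 1) by reflexivity; apply le_INR; lia).
  assert (INR N * INR (cg (S M)) < INR N * (eps / 2 * (INR M + 1))) by (apply Rmult_lt_compat_l; lra).
  assert (0 <= INR N * eps) by nra.
  nra.
Qed.

Lemma T1b : (forall M, (cf (N*M) <= N * cg (S M))%nat) ->
  (forall n k, (cf n <= cf (n+k))%nat) -> High cf -> High cg.
Proof.
  intros E Hm [a [Ha Hh]]. exists (a/3); split; [lra|]. intros K.
  destruct (Hh (N*(K+1))%nat) as [n [Hn Hc]].
  destruct (divmod n) as [m [r [Hnm Hr]]].
  assert (a1 : (cf n <= N * cg (S (S m)))%nat).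
  { pose proof (E (S m)). pose proof (Hm n (N - r)%nat).
    replace (N * S m)%nat with (n + (N - r))%nat in * by nia. lia. }
  assert (b : (N * S (S m) <= 3 * n)%nat) by nia.
  exists (S (S m)); split; [nia|].
  apply le_INR in a1. apply le_INR in b. rewrite !mult_INR in *.
  pose proof INRN_pos.
  apply (Rmult_lt_reg_l (INR N)); auto.
  replace (INR 3) with 3 in b by (simpl; lra).
  nra.
Qed.

Lemma T2b : (forall M, (cg M <= cf (N*M))%nat) -> High cg -> High cf.
Proof.
  intros E [a [Ha Hh]]. pose proof INRN_pos.
  exists (a / INR N); split; [apply Rdiv_lt_0_compat; lra|]. intros K.
  destruct (Hh K) as [m [Hm Hc]]. exists (N*m)%nat; split; [nia|].
  pose proof (E m) as e. apply le_INR in e. rewrite mult_INR in *.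
  replace (a / INR N * (INR N * INR m)) with (a * INR m) by (field; lra). lra.
Qed.
End T.

Theorem mainTheorem2 (X : Type) (d : X -> X -> R) (f : nat -> X -> X)
  (flim : X -> X) :
  is_metric d -> mcompact d ->
  (forall n, mcontinuous d (f n)) ->
  unif_conv d f flim ->
  forall N : nat, (1 <= N)%nat ->
  (DC2' d f <-> DC2' d (iterN f N)).
Proof.
  intros Hd Hc Hf Hu N HN. split.
  - intros [S [HS H]]. exists S; split; auto. intros x y Sx Sy Hxy.
    destruct (H x y Sx Sy Hxy) as [[eps [Heps Hphi]] Hstar]. split.
    + destruct (fact_hit d f flim Hd Hc Hf Hu N eps Heps) as [de [Hde Hh]].
      exists de; split; auto.
      apply (L2 (cnt d (iterN f N) x y de)).
      apply (T1a N HN (cnt d f x y eps)).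
      * intros M. exact (E1 d f x y N HN de eps (fun i j Hj Hi => Hh x y i j Hj Hi) M).
      * intros; apply cnt_step.
      * apply (L1 _ Hphi).
    + intros t Ht.
      destruct (fact_hit d f flim Hd Hc Hf Hu N t Ht) as [de [Hde Hh]].
      apply (L4 (cnt d (iterN f N) x y t)).
      apply (T1b N HN (cnt d f x y de)).
      * intros M. exact (E2 d f x y N HN de t (fun i j Hj Hi => Hh x y i j Hj Hi) M).
      * intros; apply cnt_mono.
      * apply (L3 _ (Hstar de Hde)).
  - intros [S [HS H]]. exists S; split; auto. intros x y Sx Sy Hxy.
    destruct (H x y Sx Sy Hxy) as [[eps [Heps Hphi]] Hstar]. split.
    + destruct (fact_hit d f flim Hd Hc Hf Hu N eps Heps) as [de [Hde Hh]].
      exists de; split; auto.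
      apply (L2 (cnt d f x y de)).
      apply (T2a N HN _ (cnt d (iterN f N) x y eps)).
      * intros M. exact (E2 d f x y N HN de eps (fun i j Hj Hi => Hh x y i j Hj Hi) M).
      * apply (L1 _ Hphi).
    + intros t Ht.
      apply (L4 (cnt d f x y t)).
      apply (T2b N HN _ (cnt d (iterN f N) x y t)).
      * intros M. exact (E3 d f x y N HN t M).
      * apply (L3 _ (Hstar t Ht)).
Qed.
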